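(* Let $\mathbb{F}$ be an algebraically closed field with $\mathrm{char}\,\mathbb{F}=2$, and let $\mathcal{A}$ be a (not necessarily unital) subalgebra of $\mathbf{O}$ with $\mathcal{A}\subseteq\mathbf{O}_0$ and $\dim\mathcal{A}\ge2$. Then there exists $g\in{\rm G}_2$ such that either (a) $\{1_{\mathbf{O}},\mathbf{u}_1\}\subseteq g\mathcal{A}$; or (b) $\{\mathbf{u}_1,\mathbf{v}_2\}\subseteq g\mathcal{A}$ and $1_{\mathbf{O}}\notin g\mathcal{A}$.
   Context: The split octonion algebra $\mathbf{O}$ is the 8-dimensional $\mathbb{F}$-vector space of formal matrices $a=\begin{pmatrix}\alpha&\mathbf{u}\\ \mathbf{v}&\beta\end{pmatrix}$ with $\alpha,\beta\in\mathbb{F}$, $\mathbf{u},\mathbf{v}\in\mathbb{F}^3$, with multiplication $\begin{pmatrix}\alpha&\mathbf{u}\\ \mathbf{v}&\beta\end{pmatrix}\begin{pmatrix}\alpha'&\mathbf{u}'\\ \mathbf{v}'&\beta'\end{pmatrix}=\begin{pmatrix}\alpha\alpha'+\mathbf{u}\cdot\mathbf{v}'&\alpha\mathbf{u}'+\beta'\mathbf{u}-\mathbf{v}\times\mathbf{v}'\\ \alpha'\mathbf{v}+\beta\mathbf{v}'+\mathbf{u}\times\mathbf{u}'&\beta\beta'+\mathbf{v}\cdot\mathbf{u}'\end{pmatrix}$ (dot product and cross product on $\mathbb{F}^3$). Trace $\mathrm{tr}(a)=\alpha+\beta$, $\mathbf{O}_0=\{a\in\mathbf{O}\mid\mathrm{tr}(a)=0\}$.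 With $\mathbf{c}_1,\mathbf{c}_2,\mathbf{c}_3$ the standard basis of $\mathbb{F}^3$: $\mathbf{u}_i$ has $\mathbf{u}=\mathbf{c}_i$ and all else $0$, $\mathbf{v}_i$ has $\mathbf{v}=\mathbf{c}_i$ and all else $0$, and $1_{\mathbf{O}}$ has $\alpha=\beta=1$, $\mathbf{u}=\mathbf{v}=0$. ${\rm G}_2=\mathrm{Aut}(\mathbf{O})$. *)

(* Defs.v *)
From HB Require Import structures.
From mathcomp Require Import all_boot all_order all_algebra.
Set Implicit Arguments. Unset Strict Implicit. Unset Printing Implicit Defensive.
Import GRing.Theory.
Local Open Scope ring_scope.

(* The split octonions over F, realised as the 8-dimensional coordinate space
   'rV[F]_8.  Coordinate layout of a = (alpha u ; v beta):
     index 0      : alpha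
     indices 1..3 : u = (u_1,u_2,u_3)
     indices 4..6 : v = (v_1,v_2,v_3)
     index 7      : beta                                                     *)
Section Octonions.
Variable F : fieldType.

Definition Oct := 'rV[F]_8.

Definition oalpha (x : Oct) : F := x 0 (inord 0).
Definition obeta  (x : Oct) : F := x 0 (inord 7).
Definition ou (x : Oct) : 'rV[F]_3 := \row_(i < 3) x 0 (inord i.+1).
Definition ov (x : Oct) : 'rV[F]_3 := \row_(i < 3) x 0 (inord (i + 4)).

Definition mkO (a : F) (u v : 'rV[F]_3) (b : F) : Oct :=
  \row_(i < 8) (if (i : nat) == 0%N then a
               else if (i < 4)%N then u 0 (inord i.-1)
               else if (i < 7)%N then v 0 (inord (i - 4))
               else b).

Definition dot3 (u v : 'rV[F]_3) : F := \sum_(i < 3) u 0 i * v 0 i.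
Definition cross3 (u v : 'rV[F]_3) : 'rV[F]_3 :=
  \row_(i < 3) (u 0 (inord ((i + 1) %% 3)) * v 0 (inord ((i + 2) %% 3))
              - u 0 (inord ((i + 2) %% 3)) * v 0 (inord ((i + 1) %% 3))).

(* Zorn vector-matrix multiplication *)
Definition omul (x y : Oct) : Oct :=
  mkO (oalpha x * oalpha y + dot3 (ou x) (ov y))
      (oalpha x *: ou y + obeta y *: ou x - cross3 (ov x) (ov y))
      (oalpha y *: ov x + obeta x *: ov y + cross3 (ou x) (ou y))
      (obeta x * obeta y + dot3 (ov x) (ou y)).

Definition otr (x : Oct) : F := oalpha x + obeta x.

(* standard basis vectors c_i of F^3 (i = 1,2,3 in the paper; 0-based here) *)
Definition cvec (i : nat) : 'rV[F]_3 := \row_(j < 3) (if (j : nat) == i then 1 else 0).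

Definition oone : Oct := mkO 1 0 0 1.
Definition ou_ (i : nat) : Oct := mkO 0 (cvec i.-1) 0 0.
Definition ov_ (i : nat) : Oct := mkO 0 0 (cvec i.-1) 0.

Definition isG2 (g : 'End(Oct)) : Prop :=
  lker g = 0%VS /\ forall x y, g (omul x y) = omul (g x) (g y).

Definition is_subalgebra (A : {vspace Oct}) : Prop :=
  forall x y, x \in A -> y \in A -> omul x y \in A.

Definition in_O0 (A : {vspace Oct}) : Prop :=
  forall x, x \in A -> otr x = 0.

End Octonions.

(* Main.v *)
Require Import Defs.
From HB Require Import structures.
From mathcomp Require Import all_boot all_order all_algebra.
From mathcomp Require Import ring.
Set Implicit Arguments. Unset Strict Implicit. Unset Printing Implicit Defensive.
Import GRing.Theory.
Local Open Scope ring_scope.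

Definition co (F : fieldType) (x : Oct F) (k : nat) : F := x 0 (inord k).
Definition mk8 (F : fieldType) (f : nat -> F) : Oct F := \row_(i < 8) f (i : nat).

Lemma co_mk8 (F : fieldType) (f : nat -> F) k : (k < 8)%N -> co (mk8 f) k = f k.
Proof. by move=> h; rewrite /co /mk8 mxE inordK. Qed.

Lemma oct_ext (F : fieldType) (x y : Oct F) :
  (forall k, (k < 8)%N -> co x k = co y k) -> x = y.
Proof. move=> H; apply/rowP => i. have := H i (ltn_ord i). by rewrite /co inord_val. Qed.

Lemma co_mkO (F : fieldType) a (u v : 'rV[F]_3) b :
  [/\ co (mkO a u v b) 0 = a, co (mkO a u v b) 1 = u 0 (inord 0),
      co (mkO a u v b) 2 = u 0 (inord 1), co (mkO a u v b) 3 = u 0 (inord 2)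
   & [/\ co (mkO a u v b) 4 = v 0 (inord 0), co (mkO a u v b) 5 = v 0 (inord 1),
      co (mkO a u v b) 6 = v 0 (inord 2) & co (mkO a u v b) 7 = b]].
Proof. by rewrite /co /mkO !mxE !inordK. Qed.

Lemma ou_co (F : fieldType) (x : Oct F) :
  [/\ ou x 0 (inord 0) = co x 1, ou x 0 (inord 1) = co x 2 & ou x 0 (inord 2) = co x 3].
Proof. by rewrite /ou !mxE !inordK. Qed.
Lemma ov_co (F : fieldType) (x : Oct F) :
  [/\ ov x 0 (inord 0) = co x 4, ov x 0 (inord 1) = co x 5 & ov x 0 (inord 2) = co x 6].
Proof. by rewrite /ov !mxE !inordK. Qed.

Lemma dot3E (F : fieldType) (u v : 'rV[F]_3) :
  dot3 u v = u 0 (inord 0) * v 0 (inord 0) + u 0 (inord 1) * v 0 (inord 1) + u 0 (inord 2) * v 0 (inord 2).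
Proof.
have h0 : (inord 0 : 'I_3) = ord0 by apply/val_inj; rewrite /= inordK.
have h1 : (inord 1 : 'I_3) = lift ord0 ord0 by apply/val_inj; rewrite /= inordK.
have h2 : (inord 2 : 'I_3) = lift ord0 (lift ord0 ord0) by apply/val_inj; rewrite /= inordK.
rewrite /dot3 !big_ord_recl big_ord0 addr0 h0 h1 h2 addrA.
done.
Qed.

Lemma cross3E (F : fieldType) (u v : 'rV[F]_3) :
  [/\ cross3 u v 0 (inord 0) = u 0 (inord 1) * v 0 (inord 2) - u 0 (inord 2) * v 0 (inord 1),
      cross3 u v 0 (inord 1) = u 0 (inord 2) * v 0 (inord 0) - u 0 (inord 0) * v 0 (inord 2) &
      cross3 u v 0 (inord 2) = u 0 (inord 0) * v 0 (inord 1) - u 0 (inord 1) * v 0 (inord 0)].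
Proof. by rewrite /cross3 !mxE !inordK. Qed.

Definition omulc (F : fieldType) (x y : nat -> F) (k : nat) : F :=
  match k with
  | 0 => x 0 * y 0 + (x 1 * y 4 + x 2 * y 5 + x 3 * y 6)
  | 1 => x 0 * y 1 + y 7 * x 1 - (x 5 * y 6 - x 6 * y 5)
  | 2 => x 0 * y 2 + y 7 * x 2 - (x 6 * y 4 - x 4 * y 6)
  | 3 => x 0 * y 3 + y 7 * x 3 - (x 4 * y 5 - x 5 * y 4)
  | 4 => y 0 * x 4 + x 7 * y 4 + (x 2 * y 3 - x 3 * y 2)
  | 5 => y 0 * x 5 + x 7 * y 5 + (x 3 * y 1 - x 1 * y 3)
  | 6 => y 0 * x 6 + x 7 * y 6 + (x 1 * y 2 - x 2 * y 1)
  | _ => x 7 * y 7 + (x 4 * y 1 + x 5 * y 2 + x 6 * y 3)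
  end.

Lemma co_omul (F : fieldType) (x y : Oct F) k : (k < 8)%N ->
  co (omul x y) k = omulc (co x) (co y) k.
Proof.
have [o1 o2 o3] := ou_co x; have [o1' o2' o3'] := ou_co y.
have [p1 p2 p3] := ov_co x; have [p1' p2' p3'] := ov_co y.
move=> hk; rewrite /omul.
have [e0 e1 e2 e3 [e4 e5 e6 e7]] := co_mkO
  (oalpha x * oalpha y + dot3 (ou x) (ov y))
  (oalpha x *: ou y + obeta y *: ou x - cross3 (ov x) (ov y))
  (oalpha y *: ov x + obeta x *: ov y + cross3 (ou x) (ou y))
  (obeta x * obeta y + dot3 (ov x) (ou y)).
have [c1 c2 c3] := cross3E (ov x) (ov y).
have [d1 d2 d3] := cross3E (ou x) (ou y).
case: k hk => [|[|[|[|[|[|[|[|k]]]]]]]] hk //.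
all: try rewrite e0; try rewrite e1; try rewrite e2; try rewrite e3; try rewrite e4; try rewrite e5; try rewrite e6; try rewrite e7.
all: rewrite ?dot3E !mxE /=.
all: do 4 (rewrite ?inordK //=).
all: rewrite /oalpha /obeta /co /=.
all: try done.

Qed.


Lemma coD (F : fieldType) (x y : Oct F) k : co (x + y) k = co x k + co y k.
Proof. by rewrite /co mxE. Qed.
Lemma coZ (F : fieldType) (a : F) (x : Oct F) k : co (a *: x) k = a * co x k.
Proof. by rewrite /co mxE. Qed.
Lemma coN (F : fieldType) (x : Oct F) k : co (- x) k = - co x k.
Proof. by rewrite /co mxE. Qed.
Lemma co0 (F : fieldType) k : co (0 : Oct F) k = 0.
Proof. by rewrite /co mxE. Qed.

Definition fmap (F : fieldType) (M : (nat -> F) -> nat -> F) (x : Oct F) : Oct F :=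
  mk8 (M (co x)).

Definition Msig (F : fieldType) (X : nat -> F) (k : nat) : F :=
  match k with 0 => X 7%N | 1 => - X 4%N | 2 => - X 5%N | 3 => - X 6%N
  | 4 => - X 1%N | 5 => - X 2%N | 6 => - X 3%N | _ => X 0%N end.

Definition Mphi (F : fieldType) (a1 a2 a3 : F) (X : nat -> F) (k : nat) : F :=
  let s := a1 * X 4%N + a2 * X 5%N + a3 * X 6%N in
  match k with
  | 0 => X 0%N + s
  | 1 => X 1%N + (X 7%N - X 0%N) * a1 - s * a1
  | 2 => X 2%N + (X 7%N - X 0%N) * a2 - s * a2
  | 3 => X 3%N + (X 7%N - X 0%N) * a3 - s * a3
  | 4 => X 4%N - (a2 * X 3%N - a3 * X 2%N)
  | 5 => X 5%N - (a3 * X 1%N - a1 * X 3%N)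
  | 6 => X 6%N - (a1 * X 2%N - a2 * X 1%N)
  | _ => X 7%N - s
  end.

Definition Mtau (F : fieldType) (i j : nat) (t : F) (X : nat -> F) (k : nat) : F :=
  if k == j then X k + t * X i else if k == (i + 3)%N then X k - t * X (j + 3)%N else X k.

Ltac mulsolve M :=
  apply: oct_ext; intros k hk; rewrite /fmap co_mk8 // co_omul //;
  case: k hk => [|[|[|[|[|[|[|[|k]]]]]]]] hk //;
  rewrite /M /omulc /= ?co_omul // ?co_mk8 //= /omulc /=; ring.

Lemma sig_mul (F : fieldType) (x y : Oct F) :
  fmap (@Msig F) (omul x y) = omul (fmap (@Msig F) x) (fmap (@Msig F) y).
Proof. mulsolve Msig. Qed.

Lemma phi_mul (F : fieldType) a1 a2 a3 (x y : Oct F) :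
  fmap (Mphi a1 a2 a3) (omul x y) = omul (fmap (Mphi a1 a2 a3) x) (fmap (Mphi a1 a2 a3) y).
Proof. mulsolve Mphi. Qed.

Lemma tau_mul (F : fieldType) i j t (x y : Oct F) :
  (i \in [:: 1; 2; 3])%N -> (j \in [:: 1; 2; 3])%N -> i != j ->
  fmap (Mtau i j t) (omul x y) = omul (fmap (Mtau i j t) x) (fmap (Mtau i j t) y).
Proof.
rewrite !inE => /or3P[] /eqP-> /or3P[] /eqP-> //= _; mulsolve Mtau.
Qed.

Ltac linsolve M :=
  move=> a x y; apply: oct_ext; intros k hk; rewrite /fmap coD coZ !co_mk8 //;
  case: k hk => [|[|[|[|[|[|[|[|k]]]]]]]] hk //;
  rewrite /M /= !coD !coZ; ring.

Lemma sig_lin (F : fieldType) : linear (fmap (@Msig F)).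
Proof. linsolve Msig. Qed.
Lemma phi_lin (F : fieldType) (a1 a2 a3 : F) : linear (fmap (Mphi a1 a2 a3)).
Proof. linsolve Mphi. Qed.
Lemma tau_lin (F : fieldType) i j (t : F) : (i \in [:: 1; 2; 3])%N -> (j \in [:: 1; 2; 3])%N -> i != j ->
  linear (fmap (Mtau i j t)).
Proof. rewrite !inE => /or3P[] /eqP-> /or3P[] /eqP-> //= _; linsolve Mtau. Qed.

Definition mkEnd (F : fieldType) (f : Oct F -> Oct F) (H : linear f) : 'End(Oct F) :=
  linfun (HB.pack f (GRing.isLinear.Build _ _ _ _ f H) : {linear Oct F -> Oct F}).

Lemma mkEndE (F : fieldType) (f : Oct F -> Oct F) (H : linear f) x : mkEnd H x = f x.
Proof. by rewrite /mkEnd lfunE. Qed.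

Definition good (F : fieldType) (g : 'End(Oct F)) := isG2 g /\ g (oone F) = oone F.

Lemma good_comp (F : fieldType) (g1 g2 : 'End(Oct F)) : good g1 -> good g2 -> good (g2 \o g1)%VF.
Proof.
move=> [[k1 m1] o1] [[k2 m2] o2]; split; last by rewrite comp_lfunE o1 o2.
split; last by move=> x y; rewrite !comp_lfunE m1 m2.
move: k1 k2 => /eqP /lker0P i1 /eqP /lker0P i2.
apply/eqP/lker0P => x y; rewrite !comp_lfunE => h.
by apply: i1; apply: i2.
Qed.

Lemma good_mk (F : fieldType) (f f' : Oct F -> Oct F) (H : linear f) :
  (forall x y, f (omul x y) = omul (f x) (f y)) -> f (oone F) = oone F -> cancel f f' ->
  good (mkEnd H).
Proof.
move=> hm h1 hc; split; last by rewrite mkEndE.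
split; last by move=> x y; rewrite !mkEndE.
apply/eqP/lker0P => x y; rewrite !mkEndE => e.
by rewrite -(hc x) e hc.
Qed.

Definition vec8 (F : fieldType) (c0 c1 c2 c3 c4 c5 c6 c7 : F) : Oct F :=
  mk8 (fun k => nth 0 [:: c0; c1; c2; c3; c4; c5; c6; c7] k).

Lemma oone_vec (F : fieldType) : oone F = vec8 1 0 0 0 0 0 0 1.
Proof.
apply: oct_ext => k hk; rewrite /vec8 co_mk8 //.
have [e0 e1 e2 e3 [e4 e5 e6 e7]] := co_mkO 1 (0 : 'rV[F]_3) 0 1.
case: k hk => [|[|[|[|[|[|[|[|k]]]]]]]] hk //=; rewrite /oone ?e0 ?e1 ?e2 ?e3 ?e4 ?e5 ?e6 ?e7 ?mxE //.
Qed.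

Lemma ou1_vec (F : fieldType) : ou_ F 1 = vec8 0 1 0 0 0 0 0 0.
Proof.
apply: oct_ext => k hk; rewrite /vec8 co_mk8 //.
have [e0 e1 e2 e3 [e4 e5 e6 e7]] := co_mkO 0 (cvec F 0) 0 0.
case: k hk => [|[|[|[|[|[|[|[|k]]]]]]]] hk //=; rewrite /ou_ ?e0 ?e1 ?e2 ?e3 ?e4 ?e5 ?e6 ?e7 /cvec ?mxE ?inordK //.
Qed.

Lemma ov2_vec (F : fieldType) : ov_ F 2 = vec8 0 0 0 0 0 1 0 0.
Proof.
apply: oct_ext => k hk; rewrite /vec8 co_mk8 //.
have [e0 e1 e2 e3 [e4 e5 e6 e7]] := co_mkO 0 0 (cvec F 1) 0.
case: k hk => [|[|[|[|[|[|[|[|k]]]]]]]] hk //=; rewrite /ov_ ?e0 ?e1 ?e2 ?e3 ?e4 ?e5 ?e6 ?e7 /cvec ?mxE ?inordK //.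
Qed.

Ltac vsolve M :=
  apply: oct_ext; intros k hk; rewrite /fmap /vec8 !co_mk8 //;
  case: k hk => [|[|[|[|[|[|[|[|k]]]]]]]] hk //;
  rewrite /M /= ?co_mk8 //=.

Lemma sig_one (F : fieldType) : fmap (@Msig F) (oone F) = oone F.
Proof. rewrite oone_vec; vsolve Msig; by rewrite ?oppr0. Qed.
Lemma phi_one (F : fieldType) (a1 a2 a3 : F) : fmap (Mphi a1 a2 a3) (oone F) = oone F.
Proof. rewrite oone_vec; vsolve Mphi; ring. Qed.
Lemma tau_one (F : fieldType) i j (t : F) : (i \in [:: 1; 2; 3])%N -> (j \in [:: 1; 2; 3])%N -> i != j ->
  fmap (Mtau i j t) (oone F) = oone F.
Proof. rewrite !inE oone_vec => /or3P[] /eqP-> /or3P[] /eqP-> //= _; vsolve Mtau; ring. Qed.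

Ltac invsolve M :=
  move=> x; apply: oct_ext; intros k hk; rewrite /fmap !co_mk8 //;
  case: k hk => [|[|[|[|[|[|[|[|k]]]]]]]] hk //;
  rewrite /M /= ?co_mk8 //=; ring.

Lemma sig_inv (F : fieldType) : cancel (fmap (@Msig F)) (fmap (@Msig F)).
Proof. invsolve Msig. Qed.
Lemma phi_inv (F : fieldType) (a1 a2 a3 : F) : cancel (fmap (Mphi a1 a2 a3)) (fmap (Mphi (-a1) (-a2) (-a3))).
Proof. invsolve Mphi. Qed.
Lemma tau_inv (F : fieldType) i j (t : F) : (i \in [:: 1; 2; 3])%N -> (j \in [:: 1; 2; 3])%N -> i != j ->
  cancel (fmap (Mtau i j t)) (fmap (Mtau i j (-t))).
Proof. rewrite !inE => /or3P[] /eqP-> /or3P[] /eqP-> //= _; invsolve Mtau. Qed.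


Lemma good_sig (F : fieldType) : good (mkEnd (sig_lin (F:=F))).
Proof. apply: good_mk; [exact: sig_mul | exact: sig_one | exact: sig_inv]. Qed.
Lemma good_phi (F : fieldType) (a1 a2 a3 : F) : good (mkEnd (phi_lin a1 a2 a3)).
Proof. apply: good_mk; [exact: phi_mul | exact: phi_one | exact: phi_inv]. Qed.
Lemma good_tau (F : fieldType) i j (t : F) hi hj hij : good (mkEnd (@tau_lin F i j t hi hj hij)).
Proof. apply: good_mk; [move=> x y; exact: tau_mul | exact: tau_one | exact: tau_inv]. Qed.

Lemma co_gE (F : fieldType) M (H : linear (fmap M)) (x : Oct F) k : (k < 8)%N ->
  co (mkEnd H x) k = M (co x) k.
Proof. by move=> hk; rewrite mkEndE /fmap co_mk8. Qed.

Definition reach (F : fieldType) (y z : Oct F) := exists g : 'End(Oct F), good g /\ g y = z.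

Lemma reach_trans (F : fieldType) (x y z : Oct F) : reach x y -> reach y z -> reach x z.
Proof.
move=> [g1 [h1 e1]] [g2 [h2 e2]]; exists (g2 \o g1)%VF; split; first exact: good_comp.
by rewrite comp_lfunE e1 e2.
Qed.

Lemma reach_good (F : fieldType) (g : 'End(Oct F)) y : good g -> reach y (g y).
Proof. by move=> h; exists g. Qed.

Lemma reach_refl (F : fieldType) (y : Oct F) : reach y y.
Proof.
apply: (reach_trans (reach_good y (good_sig F))).
have := reach_good (mkEnd (sig_lin (F:=F)) y) (good_sig F).
by rewrite !mkEndE sig_inv.
Qed.

Lemma good_lin (F : fieldType) (g : 'End(Oct F)) : g 0 = 0.
Proof. exact: linear0. Qed.

Lemma good_inj (F : fieldType) (g : 'End(Oct F)) : good g -> injective g.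
Proof. by move=> [[k _] _]; apply/lker0P/eqP. Qed.

Lemma reach_nil (F : fieldType) (y z : Oct F) : reach y z -> y != 0 -> omul y y = 0 ->
  z != 0 /\ omul z z = 0.
Proof.
move=> [g [hg <-]] hy hyy; split.
  apply: contra hy => /eqP h; apply/eqP; apply: (good_inj hg); by rewrite h linear0.
by case: hg => [[_ m] _]; rewrite -m hyy linear0.
Qed.

Lemma nil_eqs (F : fieldType) (y : Oct F) : omul y y = 0 ->
  let Y := co y in
  [/\ Y 0%N ^+ 2 + (Y 1%N * Y 4%N + Y 2%N * Y 5%N + Y 3%N * Y 6%N) = 0,
      Y 7%N ^+ 2 + (Y 1%N * Y 4%N + Y 2%N * Y 5%N + Y 3%N * Y 6%N) = 0,
      [/\ (Y 0%N + Y 7%N) * Y 1%N = 0, (Y 0%N + Y 7%N) * Y 2%N = 0 & (Y 0%N + Y 7%N) * Y 3%N = 0] &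
      [/\ (Y 0%N + Y 7%N) * Y 4%N = 0, (Y 0%N + Y 7%N) * Y 5%N = 0 & (Y 0%N + Y 7%N) * Y 6%N = 0]].
Proof.
move=> h Y.
have e : forall k, (k < 8)%N -> omulc Y Y k = 0.
  by move=> k hk; rewrite /Y -co_omul // h co0.
have e0 := e 0%N isT; have e1 := e 1%N isT; have e2 := e 2%N isT; have e3 := e 3%N isT.
have e4 := e 4%N isT; have e5 := e 5%N isT; have e6 := e 6%N isT; have e7 := e 7%N isT.
rewrite /omulc in e0 e1 e2 e3 e4 e5 e6 e7.
split; [rewrite -e0; ring | rewrite -e7; ring | split | split].
- by rewrite -e1; ring.
- by rewrite -e2; ring.
- by rewrite -e3; ring.
- by rewrite -e4; ring.
- by rewrite -e5; ring.
- by rewrite -e6; ring.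
Qed.

Lemma oct_neq0 (F : fieldType) (y : Oct F) : y != 0 ->
  exists k, (k < 8)%N /\ co y k != 0.
Proof.
move=> hy; case: (boolP [exists k : 'I_8, co y k != 0]) => [/existsP [k hk] | /existsPn h].
  by exists k.
case/eqP: hy; apply: oct_ext => k hk; have := h (Ordinal hk); rewrite negbK co0 => /eqP.
done.
Qed.

Lemma stage1 (F : fieldType) (y : Oct F) : y != 0 -> omul y y = 0 ->
  exists z, reach y z /\ co z 0 = 0 /\ co z 7 = 0.
Proof.
move=> hy hyy; have [E0 E7 [U1 U2 U3] [V1 V2 V3]] := nil_eqs hyy.
have tr : co y 4 != 0 \/ co y 5 != 0 \/ co y 6 != 0 -> co y 0 + co y 7 = 0.
  case=> [h|[h|h]].
  - by move/eqP: V1; rewrite mulf_eq0 (negbTE h) orbF => /eqP.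
  - by move/eqP: V2; rewrite mulf_eq0 (negbTE h) orbF => /eqP.
  - by move/eqP: V3; rewrite mulf_eq0 (negbTE h) orbF => /eqP.
case: (boolP (co y 4 != 0)) => h4.
  have t := tr (or_introl h4).
  exists (mkEnd (phi_lin (- co y 0 / co y 4) 0 0) y); split; first exact: reach_good (good_phi _ _ _).
  rewrite !co_gE // /Mphi /=; split; first by field.
  by transitivity (co y 0 + co y 7); [field | exact: t].
case: (boolP (co y 5 != 0)) => h5.
  have t := tr (or_intror (or_introl h5)).
  exists (mkEnd (phi_lin 0 (- co y 0 / co y 5) 0) y); split; first exact: reach_good (good_phi _ _ _).
  rewrite !co_gE // /Mphi /=; split; first by field.
  by transitivity (co y 0 + co y 7); [field | exact: t].
case: (boolP (co y 6 != 0)) => h6.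
  have t := tr (or_intror (or_intror h6)).
  exists (mkEnd (phi_lin 0 0 (- co y 0 / co y 6)) y); split; first exact: reach_good (good_phi _ _ _).
  rewrite !co_gE // /Mphi /=; split; first by field.
  by transitivity (co y 0 + co y 7); [field | exact: t].
move: h4 h5 h6; rewrite !negbK => /eqP h4 /eqP h5 /eqP h6.
exists y; split; first exact: reach_refl.
rewrite h4 h5 h6 !mulr0 !addr0 in E0 E7.
by split; [move/eqP: E0 | move/eqP: E7]; rewrite expf_eq0 => /eqP.
Qed.

Lemma stage2 (F : fieldType) (z : Oct F) : z != 0 -> co z 0 = 0 -> co z 7 = 0 ->
  exists z', reach z z' /\ [/\ co z' 0 = 0, co z' 7 = 0 & [|| co z' 1 != 0, co z' 2 != 0 | co z' 3 != 0]].
Proof.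
move=> hz h0 h7.
case: (boolP [|| co z 1 != 0, co z 2 != 0 | co z 3 != 0]) => hu.
  by exists z; split; [exact: reach_refl|].
exists (mkEnd (sig_lin (F:=F)) z); split; first exact: reach_good (good_sig F).
rewrite !co_gE // /Msig /= h0 h7 !oppr_eq0; split => //.
have [k [hk hzk]] := oct_neq0 hz.
move: hu; rewrite !negb_or !negbK => /and3P[/eqP e1 /eqP e2 /eqP e3].
case: k hk hzk => [|[|[|[|[|[|[|[|k]]]]]]]] hk hzk //=.
- by rewrite h0 eqxx in hzk.
- by rewrite e1 eqxx in hzk.
- by rewrite e2 eqxx in hzk.
- by rewrite e3 eqxx in hzk.
- by rewrite hzk.
- by rewrite hzk orbT.
- by rewrite hzk !orbT.
- by rewrite h7 eqxx in hzk.
Qed.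

Definition gt (F : fieldType) i j (t : F) hi hj hij := mkEnd (@tau_lin F i j t hi hj hij).

Lemma reach_tau (F : fieldType) i j (t : F) hi hj hij (z : Oct F) :
  reach z (@gt F i j t hi hj hij z).
Proof. apply: reach_good; exact: good_tau. Qed.

Lemma stage3 (F : fieldType) (z : Oct F) : co z 0 = 0 -> co z 7 = 0 ->
  [|| co z 1 != 0, co z 2 != 0 | co z 3 != 0] ->
  exists z', reach z z' /\ [/\ co z' 0 = 0, co z' 7 = 0, co z' 1 = 1, co z' 2 = 0 & co z' 3 = 0].
Proof.
move=> h0 h7 hu.
have [z1 [r1 [a0 a7 a2]]] : exists z1, reach z z1 /\ [/\ co z1 0 = 0, co z1 7 = 0 & co z1 2 != 0].
  case: (boolP (co z 2 != 0)) => h2; first by exists z; split; [exact: reach_refl|].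
  move: h2; rewrite negbK => /eqP h2.
  case: (boolP (co z 1 != 0)) => h1.
    exists (@gt F 1 2 (1) isT isT isT z); split; first exact: reach_tau.
    by rewrite /gt !co_gE // /Mtau /= h0 h7 h2 add0r mul1r.
  rewrite h2 eqxx (negbTE h1) /= in hu.
  exists (@gt F 3 2 (1) isT isT isT z); split; first exact: reach_tau.
  by rewrite /gt !co_gE // /Mtau /= h0 h7 h2 add0r mul1r.
have [z2 [r2 [b0 b7 b1]]] : exists z2, reach z1 z2 /\ [/\ co z2 0 = 0, co z2 7 = 0 & co z2 1 = 1].
  exists (@gt F 2 1 ((1 - co z1 1) / co z1 2) isT isT isT z1); split; first exact: reach_tau.
  rewrite /gt !co_gE // /Mtau /= a0 a7; split => //; field; exact: a2.
have [z3 [r3 [c0 c7 c1 c2]]] : exists z3, reach z2 z3 /\ [/\ co z3 0 = 0, co z3 7 = 0, co z3 1 = 1 & co z3 2 = 0].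
  exists (@gt F 1 2 (- co z2 2) isT isT isT z2); split; first exact: reach_tau.
  rewrite /gt !co_gE // /Mtau /= b0 b7 b1; split => //; ring.
exists (@gt F 1 3 (- co z3 3) isT isT isT z3); split.
  by apply: (reach_trans r1); apply: (reach_trans r2); apply: (reach_trans r3); apply: reach_tau.
rewrite /gt !co_gE // /Mtau /= c0 c7 c1 c2; split => //; ring.
Qed.

Lemma stage4 (F : fieldType) (z : Oct F) : omul z z = 0 ->
  [/\ co z 0 = 0, co z 7 = 0, co z 1 = 1, co z 2 = 0 & co z 3 = 0] -> reach z (ou_ F 1).
Proof.
move=> hzz [h0 h7 h1 h2 h3]; have [E0 _ _ _] := nil_eqs hzz.
have h4 : co z 4 = 0.
  by rewrite h0 h1 h2 h3 expr0n /= !mul0r !addr0 add0r mul1r in E0.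
exists (mkEnd (phi_lin 0 (- co z 6) (co z 5))); split; first exact: good_phi.
rewrite ou1_vec; apply: oct_ext => k hk; rewrite co_gE // /vec8 co_mk8 //.
case: k hk => [|[|[|[|[|[|[|[|k]]]]]]]] hk //; rewrite /Mphi /= ?h0 ?h1 ?h2 ?h3 ?h4 ?h7; ring.
Qed.

Lemma stepA (F : fieldType) (y : Oct F) : y != 0 -> omul y y = 0 -> reach y (ou_ F 1).
Proof.
move=> hy hyy.
have [z1 [r1 [a0 a7]]] := stage1 hy hyy.
have [n1 m1] := reach_nil r1 hy hyy.
have [z2 [r2 [b0 b7 bu]]] := stage2 n1 a0 a7.
have [n2 m2] := reach_nil r2 n1 m1.
have [z3 [r3 H3]] := stage3 b0 b7 bu.
have [n3 m3] := reach_nil r3 n2 m2.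
apply: (reach_trans r1); apply: (reach_trans r2); apply: (reach_trans r3).
exact: stage4.
Qed.

Definition reachU (F : fieldType) (y z : Oct F) :=
  exists g : 'End(Oct F), good g /\ g (ou_ F 1) = ou_ F 1 /\ g y = z.

Lemma reachU_trans (F : fieldType) (x y z : Oct F) : reachU x y -> reachU y z -> reachU x z.
Proof.
move=> [g1 [h1 [u1 e1]]] [g2 [h2 [u2 e2]]]; exists (g2 \o g1)%VF; split; first exact: good_comp.
by rewrite !comp_lfunE u1 e1 u2 e2.
Qed.

Ltac vecsolve :=
  apply: oct_ext; intros k hk; rewrite /gt co_gE // /vec8 !co_mk8 //;
  case: k hk => [|[|[|[|[|[|[|[|k]]]]]]]] hk //;
  rewrite /Mtau /= ?co_mk8 //=.

Lemma reachU_tau (F : fieldType) i j (t : F) hi hj hij (c0 c1 c2 c3 c4 c5 c6 c7 : F) d0 d1 d2 d3 d4 d5 d6 d7 :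
  (i = 2%N /\ j = 3%N) \/ (i = 3%N /\ j = 2%N) ->
  @gt F i j t hi hj hij (vec8 c0 c1 c2 c3 c4 c5 c6 c7) = vec8 d0 d1 d2 d3 d4 d5 d6 d7 ->
  reachU (vec8 c0 c1 c2 c3 c4 c5 c6 c7) (vec8 d0 d1 d2 d3 d4 d5 d6 d7).
Proof.
move=> hij' e; exists (@gt F i j t hi hj hij); split; first exact: good_tau.
split => //; rewrite ou1_vec.
case: hij' => [[ei ej]|[ei ej]];
  apply: oct_ext => k hk; rewrite /gt co_gE // /vec8 !co_mk8 // /Mtau ei ej;
  case: k hk => [|[|[|[|[|[|[|[|k]]]]]]]] hk //=; rewrite ?co_mk8 //=; ring.
Qed.

Lemma stepB_core (F : fieldType) (p q : F) : p != 0 ->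
  reachU (vec8 0 0 0 0 0 p q 0) (vec8 0 0 0 0 0 1 0 0).
Proof.
move=> hp.
apply: (@reachU_trans _ _ (vec8 0 0 0 0 0 p 0 0)).
  apply: (@reachU_tau F 3 2 (q / p) isT isT isT); first by right.
  vecsolve; field; exact: hp.
apply: (@reachU_trans _ _ (vec8 0 0 0 0 0 p 1 0)).
  apply: (@reachU_tau F 3 2 (- 1 / p) isT isT isT); first by right.
  vecsolve; field; exact: hp.
apply: (@reachU_trans _ _ (vec8 0 0 0 0 0 1 1 0)).
  apply: (@reachU_tau F 2 3 (p - 1) isT isT isT); first by left.
  vecsolve; ring.
apply: (@reachU_tau F 3 2 1 isT isT isT); first by right.
vecsolve; ring.
Qed.

Lemma stepB (F : fieldType) (p q : F) : (p != 0) || (q != 0) ->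
  reachU (vec8 0 0 0 0 0 p q 0) (ov_ F 2).
Proof.
rewrite ov2_vec => /orP[hp|hq]; first exact: stepB_core.
case: (boolP (p != 0)) => hp; first exact: stepB_core.
move: hp; rewrite negbK => /eqP ->.
apply: (@reachU_trans _ _ (vec8 0 0 0 0 0 q q 0)); last exact: stepB_core.
apply: (@reachU_tau F 2 3 (- 1) isT isT isT); first by left.
vecsolve; ring.
Qed.


Ltac octsolve :=
  apply: oct_ext; intros k hk; rewrite ?coD ?coZ ?coN ?co0 !co_omul //;
  case: k hk => [|[|[|[|[|[|[|[|k]]]]]]]] hk //; rewrite /omulc /= ?coD ?coZ ?coN ?co0 ?co_omul //= /omulc /=; ring.

Lemma omulDl (F : fieldType) (x y z : Oct F) : omul (x + y) z = omul x z + omul y z.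
Proof. octsolve. Qed.
Lemma omulDr (F : fieldType) (x y z : Oct F) : omul z (x + y) = omul z x + omul z y.
Proof. octsolve. Qed.
Lemma omulZl (F : fieldType) (a : F) (x y : Oct F) : omul (a *: x) y = a *: omul x y.
Proof. octsolve. Qed.
Lemma omulZr (F : fieldType) (a : F) (x y : Oct F) : omul y (a *: x) = a *: omul y x.
Proof. octsolve. Qed.
Lemma omul0l (F : fieldType) (y : Oct F) : omul 0 y = 0.
Proof. octsolve. Qed.
Lemma omulalt (F : fieldType) (x y : Oct F) : omul x (omul x y) = omul (omul x x) y.
Proof. octsolve. Qed.

Lemma co_oone (F : fieldType) k : (k < 8)%N -> co (oone F) k = nth 0 [:: 1; 0; 0; 0; 0; 0; 0; 1] k.
Proof. by move=> hk; rewrite oone_vec /vec8 co_mk8. Qed.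

Lemma sq_tr0 (F : fieldType) (x : Oct F) : co x 0 + co x 7 = 0 ->
  omul x x = (co x 0 ^+ 2 + (co x 1 * co x 4 + co x 2 * co x 5 + co x 3 * co x 6)) *: oone F.
Proof.
move=> h; have e7 : co x 7 = - co x 0 by apply/eqP; rewrite -addr_eq0 addrC h.
apply: oct_ext => k hk; rewrite coZ co_omul // co_oone //.
case: k hk => [|[|[|[|[|[|[|[|k]]]]]]]] hk //; rewrite /omulc /= ?e7; ring.
Qed.

Lemma sq_shift (F : fieldType) (x : Oct F) (r : F) : (forall a : F, a + a = 0) ->
  co x 7 = co x 0 -> r ^+ 2 = co x 1 * co x 4 + co x 2 * co x 5 + co x 3 * co x 6 ->
  omul (x + (r - co x 0) *: oone F) (x + (r - co x 0) *: oone F) = 0.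
Proof.
move=> h2 e7 hr.
apply: oct_ext => k hk; rewrite co0 co_omul //.
case: k hk => [|[|[|[|[|[|[|[|k]]]]]]]] hk //; rewrite /omulc /= !coD !coZ !co_oone //= ?e7.
- transitivity (r ^+ 2 + r ^+ 2); first by rewrite {1}hr; ring. exact: h2.
- transitivity ((r + r) * co x 1); [ring | by rewrite h2 mul0r].
- transitivity ((r + r) * co x 2); [ring | by rewrite h2 mul0r].
- transitivity ((r + r) * co x 3); [ring | by rewrite h2 mul0r].
- transitivity ((r + r) * co x 4); [ring | by rewrite h2 mul0r].
- transitivity ((r + r) * co x 5); [ring | by rewrite h2 mul0r].
- transitivity ((r + r) * co x 6); [ring | by rewrite h2 mul0r].
- transitivity (r ^+ 2 + r ^+ 2); first by rewrite {1}hr; ring. exact: h2.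
Qed.

Lemma annih (F : fieldType) (b : Oct F) : omul (ou_ F 1) b = 0 -> omul b (ou_ F 1) = 0 ->
  [/\ co b 0 = 0, co b 2 = 0, co b 3 = 0, co b 4 = 0 & co b 7 = 0].
Proof.
rewrite ou1_vec => h1 h2.
have e1 : forall k, (k < 8)%N -> omulc (co (vec8 0 1 0 0 0 0 0 0)) (co b) k = 0.
  by move=> k hk; rewrite -co_omul // h1 co0.
have e2 : forall k, (k < 8)%N -> omulc (co b) (co (vec8 0 1 0 0 0 0 0 0)) k = 0.
  by move=> k hk; rewrite -co_omul // h2 co0.
have a0 := e2 1%N isT; have a4 := e1 0%N isT; have a7 := e1 1%N isT.
have a3 := e1 5%N isT; have a2 := e1 6%N isT.
rewrite /omulc /vec8 ?co_mk8 //= in a0 a4 a7 a3 a2.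
split.
- by rewrite -a0; ring.
- by rewrite -a2; ring.
- by apply/eqP; rewrite -oppr_eq0; apply/eqP; rewrite -a3; ring.
- by rewrite -a4; ring.
- by rewrite -a7; ring.
Qed.
Lemma omulNr (F : fieldType) (x y : Oct F) : omul y (- x) = - omul y x.
Proof. octsolve. Qed.
Lemma vec8_0 (F : fieldType) : vec8 0 0 0 0 0 0 0 0 = 0 :> Oct F.
Proof. apply: oct_ext => k hk; rewrite /vec8 co_mk8 // co0; by case: k hk => [|[|[|[|[|[|[|[|k]]]]]]]] hk. Qed.


Lemma exists_out (F : fieldType) (A : {vspace Oct F}) (v : Oct F) : (2 <= \dim A)%N ->
  exists2 x, x \in A & x \notin <[v]>%VS.
Proof.
move=> hd; apply/subvPn; apply/negP => hs.
have := dimvS hs; rewrite dim_vline => h.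
have := leq_trans hd h; by case: (v != 0).
Qed.

Lemma sqrt_closed (F : closedFieldType) (c : F) : exists r : F, r ^+ 2 = c.
Proof.
have [r hr] := @solve_monicpoly F 2 (nth 0 [:: c]) isT.
exists r; rewrite hr !big_ord_recr big_ord0 /= expr0 expr1; ring.
Qed.

Theorem lemma6p8 (F : closedFieldType) (hchar : 2%N \in [pchar F])
    (A : {vspace Oct F}) (hsub : is_subalgebra A) (hO0 : in_O0 A)
    (hdim : (2 <= \dim A)%N) :
  exists g : 'End(Oct F), isG2 g /\
    ((oone F \in (g @: A)%VS /\ ou_ F 1 \in (g @: A)%VS) \/
     (ou_ F 1 \in (g @: A)%VS /\ ov_ F 2 \in (g @: A)%VS /\
      oone F \notin (g @: A)%VS)).
Proof.
have h2 : forall a : F, a + a = 0.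
  by move=> a; rewrite -mulr2n -mulr_natr (pcharf0 hchar) mulr0.
have tr0 : forall x, x \in A -> co x 0 + co x 7 = 0 by move=> x /hO0.
case: (boolP (oone F \in A)) => h1.
  have [x xA xn1] := exists_out (oone F) hdim.
  have e7 : co x 7 = co x 0.
    transitivity (co x 7 + (co x 0 + co x 0)); first by rewrite h2 addr0.
    by rewrite addrA [co x 7 + _]addrC tr0 // add0r.
  have [r hr] := sqrt_closed (co x 1 * co x 4 + co x 2 * co x 5 + co x 3 * co x 6).
  set y := x + (r - co x 0) *: oone F.
  have yy : omul y y = 0 by exact: sq_shift.
  have yA : y \in A by rewrite memvD // memvZ.
  have yn0 : y != 0.
    apply: contra xn1 => /eqP hy; apply/vlineP; exists (- (r - co x 0)).
    by rewrite scaleNr; apply/eqP; rewrite -addr_eq0; apply/eqP; exact: hy.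
  have [g [[hg g1] gy]] := stepA yn0 yy.
  exists g; split => //; left; split.
    by rewrite -g1 memv_img.
  by rewrite -gy memv_img.
have nil : forall z, z \in A -> omul z z = 0.
  move=> z zA; have hz := sq_tr0 (tr0 z zA).
  move: hz; set c := (co z 0 ^+ 2 + _) => hz.
  case: (eqVneq c 0) => hc; first by rewrite hz hc scale0r.
  case/negP: h1; have -> : oone F = c^-1 *: omul z z by rewrite hz scalerA mulVf // scale1r.
  by rewrite memvZ // hsub.
have ac : forall a b, a \in A -> b \in A -> omul b a = - omul a b.
  move=> a b aA bA; have := nil _ (memvD aA bA).
  rewrite omulDl !omulDr (nil a) // (nil b) // add0r addr0 => /eqP.
  by rewrite addrC addr_eq0 => /eqP.
have [x xA xn1] := exists_out (oone F) hdim.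
have xn0 : x != 0 by apply: contra xn1 => /eqP ->; rewrite mem0v.
have [y yA yx] := exists_out x hdim.
have [a [b [aA bA an0 bn [ab ba]]]] : exists a b, [/\ a \in A, b \in A, a != 0, b \notin <[a]>%VS &
     omul a b = 0 /\ omul b a = 0].
  case: (eqVneq (omul x y) 0) => hz.
    by exists x, y; split => //; split => //; rewrite ac // hz oppr0.
  have xxy : omul x (omul x y) = 0 by rewrite omulalt nil // omul0l.
  exists x, (omul x y); split => //; [exact: hsub | | split => //; by rewrite ac ?hsub // xxy oppr0].
  apply/negP => /vlineP [l hl].
  have yz : omul y (omul x y) = 0.
    by rewrite (ac y x) // omulNr omulalt nil // omul0l oppr0.
  have : omul y (omul x y) = - (l * l) *: x.
    by rewrite {1}hl omulZr (ac x y) // hl scalerN scalerA scaleNr.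
  rewrite yz => /esym/eqP; rewrite scaler_eq0 oppr_eq0 mulf_eq0 orbb (negbTE xn0) orbF => /eqP l0.
  by move: hz; rewrite hl l0 scale0r eqxx.
have [g [[[hk hm] g1] ga]] := stepA an0 (nil a aA).
have ginj : injective g by apply/lker0P/eqP.
set b' := g b.
have ub : omul (ou_ F 1) b' = 0 by rewrite -ga /b' -hm ab linear0.
have bu : omul b' (ou_ F 1) = 0 by rewrite -ga /b' -hm ba linear0.
have [c0 c2 c3 c4 c7] := annih ub bu.
set s := co b' 1.
have ew : b' - s *: ou_ F 1 = vec8 0 0 0 0 0 (co b' 5) (co b' 6) 0.
  rewrite ou1_vec; apply: oct_ext => k hk8; rewrite coD coN coZ /vec8 !co_mk8 //.
  case: k hk8 => [|[|[|[|[|[|[|[|k]]]]]]]] hk8 //=; rewrite ?c0 ?c2 ?c3 ?c4 ?c7 /s; ring.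
have pq : (co b' 5 != 0) || (co b' 6 != 0).
  rewrite -negb_and; apply/negP => /andP[/eqP p0 /eqP q0].
  case/negP: bn; apply/vlineP; exists s; apply: ginj.
  move: ew; rewrite p0 q0 vec8_0 => /eqP; rewrite subr_eq0 => /eqP.
  by rewrite linearZ /= ga.
have [h [hh [hu hw]]] := stepB pq.
have gG : good g by split.
have gc := good_comp gG hh.
exists (h \o g)%VF; split; first by case: gc.
right; split; [|split].
- by apply/memv_imgP; exists a => //; rewrite comp_lfunE ga hu.
- apply/memv_imgP; exists (b - s *: a); first by rewrite memvB // memvZ.
  by rewrite comp_lfunE linearB linearZ /= ga -/b' ew hw.
- apply/negP => /memv_imgP [c cA hc].
  case/negP: h1; suff -> : oone F = c by [].
  apply: (good_inj gc); rewrite -hc; by case: gc.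
Qed.
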